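(* Let ${\mathcal M}$ be a $q$-matroid on $\mathbb{F}_q^n$ of rank $r\ge1$, and let $F_1,\dots,F_t$ be its bases listed in increasing order with respect to $\prec_q^r$. Order the facets of the order complex $I_{{\mathcal M}}$ by $\prec_\ell$ and let $\mathcal{R}$ be the associated restriction operator. Then there exists a facet $A$ of $I_{{\mathcal M}}$ with $\mathcal{R}(A)=A$ if and only if there exist indices $1\le i<j\le t$ such that $\dim_{\mathbb{F}_q}(F_i\cap F_j)=r-1$ and $\min(F_j\setminus\{0\})\notin F_i$, where the minimum is taken with respect to $\prec$.
   Context: A $q$-matroid is a pair $(E,\rho)$, $E=\mathbb{F}_q^n$, with $\rho$ from subspaces to $\mathbb{Z}_{\ge0}$ satisfying $0\le\rho(X)\le\dim X$, monotonicity, and $\rho(X+Y)+\rho(X\cap Y)\le\rho(X)+\rho(Y)$; rank $=\rho(E)$; $U$ is independent if $\rho(U)=\dim U$; bases are maximal independent subspaces (all of dimension $r$). Fix a total order $\prec$ on $\mathbb{F}_q$ with $0\prec1\prec\alpha$ for all $\alpha\ne0,1$, extended lexicographically to $\mathbb{F}_q^n$ and to tuples in $(\mathbb{F}_q^n)^k$. For a $k$-dimensional subspace $U$ with reduced row echelon generator matrix having rows $u_k,u_{k-1},\dots,u_1$ from top to bottom, its reduced generator is $(u_1,\dots,u_k)$; the order $\prec_q^k$ on $k$-dimensional subspaces is the lexicographic order of reduced generators. The order complex $I_{{\mathcal M}}$ is the simplicial complex whose vertices are the nonzero independent subspaces and whose faces are chains of them; its facets are the chains $A=(A_1\subsetneq\cdots\subsetneq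 A_r)$ of independent subspaces with $\dim A_m=m$. For two such facets $U,V$, $U\prec_\ell V$ iff, for the largest index $e$ with $U_e\ne V_e$, one has $U_e\prec_q^e V_e$; this linear order of facets is a shelling of $I_{{\mathcal M}}$. For a facet $A$, $\mathcal{R}(A)$ is the set of vertices $A_m$ of $A$ such that $A\setminus\{A_m\}$ is a face of some facet preceding $A$ in the order $\prec_\ell$. *)

(* Defs.v *)
From HB Require Import structures.
From mathcomp Require Import all_boot all_order all_algebra.
Set Implicit Arguments. Unset Strict Implicit. Unset Printing Implicit Defensive.
Import GRing.Theory.
Local Open Scope ring_scope.

Section QMatroid.
Variables (F : finFieldType) (n : nat).
(* the total order on F_q is encoded by an injective "position" map
   o : F -> nat with o 0 = 0 and o 1 = 1 : x ≺ y iff o x < o y *)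
Variable o : F -> nat.

Definition subsp := {vspace 'rV[F]_n}.

Definition qmatroid_axioms (rho : subsp -> nat) : Prop :=
  [/\ forall X : subsp, (rho X <= \dim X)%N,
      forall X Y : subsp, (X <= Y)%VS -> (rho X <= rho Y)%N &
      forall X Y : subsp, (rho (X + Y)%VS + rho (X :&: Y)%VS <= rho X + rho Y)%N].

Definition qrank (rho : subsp -> nat) : nat := rho fullv.

Definition independent (rho : subsp -> nat) (U : subsp) : Prop := rho U = \dim U.

Definition qbasis (rho : subsp -> nat) (B : subsp) : Prop :=
  independent rho B /\
  forall U : subsp, independent rho U -> (B <= U)%VS -> U = B.

Definition vec_lt (v w : 'rV[F]_n) : Prop :=
  exists j : 'I_n, (forall j' : 'I_n, (j' < j)%N -> v ord0 j' = w ord0 j') /\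
                   (o (v ord0 j) < o (w ord0 j))%N.

Definition is_rref (k : nat) (M : 'M[F]_(k, n)) : Prop :=
  exists p : 'I_k -> 'I_n,
    [/\ forall i i' : 'I_k, (i < i')%N -> (p i < p i')%N,
        forall i : 'I_k, M i (p i) = 1,
        forall (i : 'I_k) (j : 'I_n), (j < p i)%N -> M i j = 0 &
        forall i i' : 'I_k, i' != i -> M i' (p i) = 0].

Definition rowspan (k : nat) (M : 'M[F]_(k, n)) : subsp :=
  <<[seq row i M | i <- enum 'I_k]>>%VS.

(* Lexicographic order on reduced generators (u_1,...,u_k), where u_1 is the
   bottom row (index k-1) of the RREF matrix, u_k the top row (index 0).
   So u_1 (largest row index) is compared first. *)
Definition redgen_lt (k : nat) (M N : 'M[F]_(k, n)) : Prop :=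
  exists i : 'I_k, (forall i' : 'I_k, (i < i')%N -> row i' M = row i' N) /\
                   vec_lt (row i M) (row i N).

Definition subsp_lt (k : nat) (U V : subsp) : Prop :=
  exists M N : 'M[F]_(k, n),
    [/\ is_rref M, is_rref N, rowspan M = U, rowspan N = V & redgen_lt M N].

Definition is_min_nonzero (U : subsp) (v : 'rV[F]_n) : Prop :=
  [/\ v \in U, v != 0 &
      forall w : 'rV[F]_n, w \in U -> w != 0 -> w != v -> vec_lt v w].

(* facets of the order complex I_M: chains A_1 ⊊ ... ⊊ A_r of independent
   subspaces with dim A_m = m (only indices 1..r are relevant) *)
Definition facet (rho : subsp -> nat) (A : nat -> subsp) : Prop :=
  (forall m, (1 <= m <= qrank rho)%N -> independent rho (A m) /\ \dim (A m) = m) /\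
  (forall m, (1 <= m)%N -> (m < qrank rho)%N ->
       (A m <= A m.+1)%VS /\ A m != A m.+1).

Definition facet_lt (rho : subsp -> nat) (U V : nat -> subsp) : Prop :=
  exists e, [/\ (1 <= e <= qrank rho)%N, U e != V e,
     forall e', (e < e' <= qrank rho)%N -> U e' = V e' &
     subsp_lt e (U e) (V e)].

(* A_m ∈ R(A): A \ {A_m} is a face of some facet B preceding A *)
Definition in_restriction (rho : subsp -> nat) (A : nat -> subsp) (m : nat) : Prop :=
  exists B, [/\ facet rho B, facet_lt rho B A &
    forall l, (1 <= l <= qrank rho)%N -> l != m ->
      exists l', (1 <= l' <= qrank rho)%N /\ A l = B l'].

Definition restriction_full (rho : subsp -> nat) (A : nat -> subsp) : Prop :=
  forall m, (1 <= m <= qrank rho)%N -> in_restriction rho A m.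

End QMatroid.

(* Main.v *)
Require Import Defs.
From HB Require Import structures.
From mathcomp Require Import all_boot all_order all_algebra.
From mathcomp Require Import zify.
Set Implicit Arguments. Unset Strict Implicit. Unset Printing Implicit Defensive.
Import GRing.Theory.
Local Open Scope ring_scope.

Lemma vec_lt_irr (F : finFieldType) (n : nat) (o : F -> nat) (v : 'rV[F]_n) :
  ~ vec_lt o v v.
Proof. by case=> j [_]; rewrite ltnn. Qed.

Lemma vec_lt_trans (F : finFieldType) (n : nat) (o : F -> nat) (u v w : 'rV[F]_n) :
  vec_lt o u v -> vec_lt o v w -> vec_lt o u w.
Proof.
case=> j1 [E1 L1] [j2 [E2 L2]].
case: (ltngtP j1 j2) => [lt12|lt21|/val_inj eq12].
- exists j1; split; last by rewrite -(E2 j1 lt12).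
  by move=> j' lj'; rewrite E1 // E2 // (ltn_trans lj').
- exists j2; split; last by rewrite (E1 j2 lt21).
  by move=> j' lj'; rewrite E1 ?E2 // (ltn_trans lj').
- subst j2; exists j1; split; first by move=> j' lj'; rewrite E1 ?E2.
  exact: ltn_trans L2.
Qed.

Lemma vec_lt_total (F : finFieldType) (n : nat) (o : F -> nat) (o_inj : injective o)
  (v w : 'rV[F]_n) : v != w -> vec_lt o v w \/ vec_lt o w v.
Proof.
move=> vw.
have [j0 Hj0] : exists j : 'I_n, v ord0 j != w ord0 j.
  apply/existsP; apply: contraR vw; rewrite negb_exists => /forallP H.
  apply/eqP/rowP => j; apply/eqP; move/(_ j): H; by rewrite negbK.
case: (@arg_minnP _ j0 (fun j : 'I_n => v ord0 j != w ord0 j) (fun j : 'I_n => nat_of_ord j) Hj0) => j Hj Hmin.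
have Hpre : forall j' : 'I_n, (j' < j)%N -> v ord0 j' = w ord0 j'.
  move=> j' lj'; apply/eqP; apply: contraLR lj' => H; rewrite -leqNgt; exact: Hmin.
have : o (v ord0 j) != o (w ord0 j) by rewrite (inj_eq o_inj).
case: ltngtP => // H _; [left|right]; exists j; split => //.
by move=> j' lj'; rewrite Hpre.
Qed.


Lemma seq_min (F : finFieldType) (n : nat) (o : F -> nat) (o_inj : injective o)
  (s : seq 'rV[F]_n) : s != [::] ->
  exists2 x, x \in s & forall y, y \in s -> y != x -> vec_lt o x y.
Proof.
elim: s => // a t IH _.
case: t IH => [|b t] IH.
  by exists a => [|y]; rewrite ?mem_seq1 ?eqxx // => /eqP ->; rewrite eqxx.
have [x xt Hx] := IH isT.
have [ax|nax] := eqVneq a x.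
  exists x; first by rewrite inE ax eqxx.
  move=> y; rewrite inE => /orP[/eqP->|yt]; first by rewrite ax eqxx.
  exact: Hx.
case: (vec_lt_total o_inj nax) => H.
  exists a; first by rewrite inE eqxx.
  move=> y; rewrite inE => /orP[/eqP->|yt]; first by rewrite eqxx.
  move=> ya; have [->|yx] := eqVneq y x; first by [].
  exact: vec_lt_trans H (Hx y yt yx).
exists x; first by rewrite inE xt orbT.
move=> y; rewrite inE => /orP[/eqP->|yt] // yx; exact: Hx.
Qed.

Lemma min_exists (F : finFieldType) (n : nat) (o : F -> nat) (o_inj : injective o)
  (U : subsp F n) : U != 0%VS -> exists v, is_min_nonzero o U v.
Proof.
move=> U0.
pose s := [seq w <- enum 'rV[F]_n | (w \in U) && (w != 0)].
have : s != [::].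
  have : vpick U \in s by rewrite mem_filter memv_pick vpick0 U0 mem_enum.
  by case: s.
case/(seq_min o_inj) => x; rewrite mem_filter => /andP[/andP[xU x0] _] Hx.
exists x; split => // w wU w0; apply: Hx.
by rewrite mem_filter wU w0 mem_enum.
Qed.

Lemma span_ordP (K : fieldType) (vT : vectType K) k (f : 'I_k -> vT) v :
  v \in <<[seq f i | i <- enum 'I_k]>>%VS -> exists c : 'I_k -> K, v = \sum_i c i *: f i.
Proof.
have -> : [seq f i | i <- enum 'I_k] = tval [tuple f i | i < k] by [].
move/coord_span => ->.
exists (fun i => coord [tuple f i | i < k] i v); apply: eq_bigr => i _.
by rewrite -tnth_nth tnth_mktuple.
Qed.

Lemma dim_span_ord (K : fieldType) (vT : vectType K) k (f : 'I_k -> vT) :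
  (forall c : 'I_k -> K, \sum_i c i *: f i = 0 -> forall i, c i = 0) ->
  \dim <<[seq f i | i <- enum 'I_k]>>%VS = k.
Proof.
move=> H.
have : free [tuple f i | i < k].
  apply/freeP => c Hc; apply: H; rewrite -[RHS]Hc; apply: eq_bigr => i _.
  by rewrite -tnth_nth tnth_mktuple.
by rewrite /free size_tuple => /eqP.
Qed.


Lemma sum_rows_entry (F : finFieldType) (n k : nat) (M : 'M[F]_(k, n)) (c : 'I_k -> F) j :
  (\sum_i c i *: row i M) 0 j = \sum_i c i * M i j.
Proof. by rewrite summxE; apply: eq_bigr => i _; rewrite !mxE. Qed.

Lemma rref_piv_entry (F : finFieldType) (n k : nat) (M : 'M[F]_(k, n)) p (c : 'I_k -> F) i :
  (forall i : 'I_k, M i (p i) = 1) -> (forall i i' : 'I_k, i' != i -> M i' (p i) = 0) ->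
  (\sum_i c i *: row i M) 0 (p i) = c i.
Proof.
move=> H1 H2; rewrite sum_rows_entry (bigD1 i) //= H1 mulr1 big1 ?addr0 //.
by move=> i' ni'; rewrite H2 ?mulr0.
Qed.

Lemma row_in_rowspan (F : finFieldType) (n k : nat) (M : 'M[F]_(k, n)) i :
  row i M \in rowspan M.
Proof. by apply: memv_span; apply: map_f; rewrite mem_enum. Qed.

Lemma rref_dim (F : finFieldType) (n k : nat) (M : 'M[F]_(k, n)) :
  is_rref M -> \dim (rowspan M) = k.
Proof.
case=> p [_ H1 _ H2]; apply: dim_span_ord => c Hc i.
by rewrite -(rref_piv_entry c i H1 H2) Hc mxE.
Qed.

Lemma rref_row_neq0 (F : finFieldType) (n k : nat) (M : 'M[F]_(k, n)) i :
  is_rref M -> row i M != 0.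
Proof.
case=> p [_ H1 _ _]; apply/eqP => /rowP /(_ (p i)); rewrite !mxE H1.
by move/eqP; rewrite oner_eq0.
Qed.

Lemma o_gt0 (F : finFieldType) (o : F -> nat) (o_inj : injective o) (o0 : o 0 = 0%N)
  (c : F) : c != 0 -> (o 0%R < o c)%N.
Proof.
move=> c0; rewrite o0 lt0n; apply: contra c0 => /eqP H; apply/eqP.
by apply: o_inj; rewrite H o0.
Qed.

Lemma o_gt1 (F : finFieldType) (o : F -> nat) (o_inj : injective o) (o0 : o 0 = 0%N)
  (o1 : o 1 = 1%N) (c : F) : c != 0 -> c != 1 -> (o 1%R < o c)%N.
Proof.
move=> c0 c1; rewrite o1 ltn_neqAle; apply/andP; split.
  by apply: contra c1 => /eqP H; apply/eqP; apply: o_inj; rewrite o1 H.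
have := o_gt0 o_inj o0 c0; by rewrite o0.
Qed.

Lemma rref_bottom (F : finFieldType) (n : nat) (o : F -> nat) (o_inj : injective o)
  (o0 : o 0 = 0%N) (o1 : o 1 = 1%N) k (M : 'M[F]_(k, n)) (b : 'I_k) :
  is_rref M -> (forall i : 'I_k, (i <= b)%N) ->
  forall w, w \in rowspan M -> w != 0 -> w = row b M \/ vec_lt o (row b M) w.
Proof.
case=> p [Hp H1 H0 H2] Hb w /span_ordP [c ->] w0.
have [i0 ci0] : exists i, c i != 0.
  apply/existsP; apply: contraR w0; rewrite negb_exists => /forallP Hc.
  apply/eqP; apply: big1 => i _; move/(_ i): Hc; rewrite negbK => /eqP ->.
  by rewrite scale0r.
case: (@arg_minnP _ i0 (fun i => c i != 0) (fun i : 'I_k => nat_of_ord i) ci0)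
  => {ci0}i1 ci1 Hmin.
have cz : forall i : 'I_k, (i < i1)%N -> c i = 0.
  move=> i li; apply/eqP; apply: contraLR li => H; rewrite -leqNgt; exact: Hmin.
have Hpre : forall j : 'I_n, (j < p i1)%N -> (\sum_i c i *: row i M) 0 j = 0.
  move=> j lj; rewrite sum_rows_entry big1 // => i _.
  case: (ltnP i i1) => [li|li]; first by rewrite cz ?mul0r.
  rewrite H0 ?mulr0 //; apply: leq_trans lj _.
  move: li; rewrite leq_eqVlt => /orP[/eqP/val_inj->//|/Hp/ltnW//].
have Hat := rref_piv_entry c i1 H1 H2.
have [eb|nb] := eqVneq i1 b.
  subst b.
  have [c1|c1] := eqVneq (c i1) 1.
    left; rewrite (bigD1 i1) //= c1 scale1r big1 ?addr0 // => i ni.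
    rewrite cz ?scale0r //; rewrite ltn_neqAle Hb andbT.
    by apply: contra ni => /eqP/val_inj ->.
  right; exists (p i1); split.
    by move=> j' lj'; rewrite Hpre // mxE H0.
  by rewrite Hat mxE H1; apply: o_gt1.
right; exists (p i1); split.
  move=> j' lj'; rewrite Hpre // mxE H0 //; apply: (ltn_trans lj'); apply: Hp.
  by rewrite ltn_neqAle Hb andbT; apply: contra nb => /eqP/val_inj ->.
rewrite Hat mxE H2 1?eq_sym //; exact: o_gt0.
Qed.


Definition hypW (F : finFieldType) (n : nat) (j0 : 'I_n) : subsp F n :=
  <<[seq delta_mx (0%R : 'I_1) j | j <- enum 'I_n & j != j0]>>%VS.

Lemma hypWP (F : finFieldType) (n : nat) (j0 : 'I_n) (w : 'rV[F]_n) :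
  (w \in hypW F j0) = (w 0 j0 == 0).
Proof.
apply/idP/idP.
  rewrite /hypW -[X in <<X>>%VS]in_tupleE => /coord_span ->.
  rewrite summxE big1 // => i _; rewrite !mxE.
  have /mapP[j] := mem_nth (0 : 'rV[F]_n) (ltn_ord i).
  rewrite mem_filter => /andP[nj _] ->.
  by rewrite mxE eqxx /= eq_sym (negbTE nj) mulr0.
move=> /eqP w0; rewrite [w]row_sum_delta; apply: rpred_sum => j _.
have [->|nj] := eqVneq j j0; first by rewrite w0 scale0r rpred0.
apply: memvZ; apply: memv_span; apply: map_f; by rewrite mem_filter nj mem_enum.
Qed.

Definition rref_s (F : finFieldType) (n : nat) (d : 'I_n) (s : seq 'rV[F]_n) (ps : seq 'I_n) : Prop :=
 [/\ size ps = size s,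
   forall i i', (i < i')%N -> (i' < size s)%N -> (nth d ps i < nth d ps i')%N,
   forall i, (i < size s)%N -> (nth 0 s i) 0 (nth d ps i) = 1,
   forall i (j : 'I_n), (i < size s)%N -> (j < nth d ps i)%N -> (nth 0 s i) 0 j = 0 &
   forall i i', (i < size s)%N -> (i' < size s)%N -> i' != i -> (nth 0 s i') 0 (nth d ps i) = 0].

Lemma nz_entry (F : finFieldType) (n : nat) (w : 'rV[F]_n) : w != 0 -> exists j, w 0 j != 0.
Proof.
move=> w0; apply/existsP; apply: contraR w0; rewrite negb_exists => /forallP H.
apply/eqP/rowP => j; rewrite mxE; apply/eqP; move/(_ j): H; by rewrite negbK.
Qed.

Lemma rref_s_exists (F : finFieldType) (n : nat) (d : 'I_n) k :
  forall U : subsp F n, \dim U = k ->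
  exists s ps, [/\ rref_s d s ps, size s = k & <<s>>%VS = U].
Proof.
elim: k => [|k IH] U dU.
  exists [::], [::]; split => //; last first.
    by rewrite span_nil; apply/eqP; rewrite eq_sym -dimv_eq0 dU.
have U0 : U != 0%VS by rewrite -dimv_eq0 dU.
have [j' Hj'] : exists j : 'I_n, [exists w : 'rV[F]_n, (w \in U) && (w 0 j != 0)].
  have : vpick U != 0 by rewrite vpick0.
  case/nz_entry => j Hj; exists j; apply/existsP; exists (vpick U).
  by rewrite memv_pick Hj.
case: (@arg_minnP _ j' (fun j => [exists w, (w \in U) && (w 0 j != 0)])
   (fun j : 'I_n => nat_of_ord j) Hj') => j0 /existsP[w0 /andP[w0U w0j]] Hmin.
have Uz : forall w, w \in U -> forall j : 'I_n, (j < j0)%N -> w 0 j = 0.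
  move=> w wU j lj; apply/eqP; apply: contraTT lj => H; rewrite -leqNgt.
  by apply: Hmin; apply/existsP; exists w; rewrite wU.
pose u1 := (w0 0 j0)^-1 *: w0.
have u1U : u1 \in U by rewrite memvZ.
have u1j : u1 0 j0 = 1 by rewrite mxE mulVf.
clearbody u1.
pose U' := (U :&: hypW F j0)%VS.
have U'P : forall w, (w \in U') = (w \in U) && (w 0 j0 == 0).
  by move=> w; rewrite memv_cap hypWP.
have dU' : \dim U' = k.
  have eqU : (U' + <[u1]>)%VS = U.
    apply/eqP; rewrite eqEsubv; apply/andP; split.
      by rewrite subv_add capvSl -memvE u1U.
    apply/subvP => w wU.
    rewrite -[w](subrK ((w 0 j0) *: u1)).
    apply: memv_add; last by rewrite memvZ // memv_line.
    by rewrite U'P memvB ?memvZ //= !mxE u1j mulr1 subrr eqxx.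
  have cap0 : (U' :&: <[u1]>)%VS = 0%VS.
    apply/eqP; rewrite -subv0; apply/subvP => x.
    rewrite memv_cap U'P => /andP[/andP[_ /eqP xj] /vlineP[c xc]].
    by rewrite memv0 xc; move: xj; rewrite xc mxE u1j mulr1 => ->; rewrite scale0r.
  have u10 : u1 != 0.
    by apply/eqP => u10; move: u1j; rewrite u10 mxE => /eqP; rewrite eq_sym oner_eq0.
  have := dimv_disjoint_sum cap0; rewrite eqU dU dim_vline u10 addn1.
  by move/eqP; rewrite eqSS => /eqP <-.
have [s [ps [[Hs1 Hs2 Hs3 Hs4 Hs5] ss sU']]] := IH U' dU'.
have sIn : forall i, (i < k)%N -> nth 0 s i \in U'.
  by move=> i li; rewrite -sU'; apply: memv_span; apply: mem_nth; rewrite ss.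
have sU : forall i, (i < k)%N -> nth 0 s i \in U.
  by move=> i /sIn; rewrite U'P => /andP[].
have sj0 : forall i, (i < k)%N -> (nth 0 s i) 0 j0 = 0.
  by move=> i /sIn; rewrite U'P => /andP[_ /eqP].
have piv : forall i, (i < k)%N -> (j0 < nth d ps i)%N.
  move=> i li; have H : (nth 0 s i) 0 (nth d ps i) = 1 by apply: Hs3; rewrite ss.
  rewrite ltnNge leq_eqVlt; apply/negP => /orP[/eqP E|E].
    have E' : nth d ps i = j0 by apply: val_inj.
    by move: H; rewrite E' sj0 // => /eqP; rewrite eq_sym oner_eq0.
  by move: H; rewrite Uz ?sU // => /eqP; rewrite eq_sym oner_eq0.
pose u2 := u1 - \sum_(i < k) (u1 0 (nth d ps i)) *: nth 0 s i.
have u2U : u2 \in U.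
  by rewrite memvB // rpred_sum // => i _; rewrite memvZ // sU.
have u2j0 : u2 0 j0 = 1.
  by rewrite !mxE summxE big1 ?subr0 // => i _; rewrite !mxE sj0 ?mulr0.
have u2piv : forall i, (i < k)%N -> u2 0 (nth d ps i) = 0.
  move=> i li; rewrite !mxE summxE (bigD1 (Ordinal li)) //= !mxE Hs3 ?ss // mulr1.
  by rewrite big1 ?addr0 ?subrr // => i' ni'; rewrite !mxE Hs5 ?ss ?mulr0.
exists (u2 :: s), (j0 :: ps); split; last first.
- apply/eqP; rewrite eqEsubv; apply/andP; split.
    apply/span_subvP => x; rewrite inE => /orP[/eqP->//|xs].
    by have := memv_span xs; rewrite sU' U'P => /andP[].
  have hs : (<<s>> <= <<u2 :: s>>)%VS by rewrite span_cons addvSr.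
  have u1in : u1 \in <<u2 :: s>>%VS.
    have -> : u1 = u2 + \sum_(i < k) (u1 0 (nth d ps i)) *: nth 0 s i by rewrite subrK.
    apply: memvD; first by apply: memv_span; rewrite mem_head.
    apply: (subvP hs); apply: rpred_sum => i _; apply: memvZ; apply: memv_span.
    by apply: mem_nth; rewrite ss.
  apply/subvP => w wU.
  rewrite -[w](subrK (w 0 j0 *: u1)); apply: memvD; last by rewrite memvZ.
  apply: (subvP hs); rewrite sU' U'P memvB ?memvZ //= !mxE u1j mulr1 subrr eqxx.
  by [].
- by rewrite /= ss.
split.
- by rewrite /= Hs1.
- case=> [|i] [|i'] //=.
    by move=> _; rewrite ltnS => li'; apply: piv; rewrite -ss.
  by rewrite !ltnS => lii' li'; apply: Hs2.
- by case=> [|i] //= li; apply: Hs3.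
- case=> [|i] j //= li lj; first exact: Uz.
  exact: Hs4.
- case=> [|i] [|i'] //= li li' ni.
  + by apply: sj0; rewrite -ss.
  + by apply: u2piv; rewrite -ss.
  + by apply: Hs5.
Qed.

Lemma rref_mx_exists (F : finFieldType) (n k : nat) (U : subsp F n) :
  \dim U = k -> (0 < k)%N -> exists M : 'M[F]_(k, n), is_rref M /\ rowspan M = U.
Proof.
move=> dU k0.
have U0 : U != 0%VS by rewrite -dimv_eq0 dU -lt0n.
have : vpick U != 0 by rewrite vpick0.
case/nz_entry => d _.
have [s [ps [[Hs1 Hs2 Hs3 Hs4 Hs5] ss sU]]] := rref_s_exists d dU.
exists (\matrix_(i < k, j < n) (nth 0 s i) 0 j); split.
  exists (fun i => nth d ps i); split.
  - by move=> i i' lii'; apply: Hs2; rewrite ?ss.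
  - by move=> i; rewrite mxE; apply: Hs3; rewrite ss.
  - by move=> i j lj; rewrite mxE; apply: Hs4; rewrite ?ss.
  - by move=> i i' ni; rewrite mxE; apply: Hs5; rewrite ?ss.
rewrite /rowspan.
have -> : [seq row i (\matrix_(i < k, j < n) (nth 0 s i) 0 j) | i <- enum 'I_k] = s.
  transitivity [seq nth 0 s (val i) | i <- enum 'I_k].
    by apply: eq_map => i; apply/rowP => j; rewrite !mxE.
  by rewrite (map_comp (nth 0 s) val) val_enum_ord -ss -/(mkseq _ _) mkseq_nth.
exact: sU.
Qed.


Lemma rho_sub (F : finFieldType) (n : nat) (rho : subsp F n -> nat) :
  qmatroid_axioms rho -> forall X Y : subsp F n, (Y <= X)%VS ->
  (rho X + \dim Y <= rho Y + \dim X)%N.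
Proof.
case=> Hd Hm Hs X Y YX.
pose Z := (X :\: Y)%VS.
have XY : (X :&: Y)%VS = Y by apply/capv_idPr.
have XZ : (Z + Y)%VS = X by rewrite /Z -{2}XY addv_diff_cap.
have dZ := dimv_cap_compl X Y; rewrite XY in dZ.
have := Hs Z Y; rewrite XZ; have := Hd Z; rewrite -/Z in dZ; lia.
Qed.

Lemma indep_sub (F : finFieldType) (n : nat) (rho : subsp F n -> nat) (X Y : subsp F n) :
  qmatroid_axioms rho -> independent rho X -> (Y <= X)%VS -> independent rho Y.
Proof.
move=> Hr HX YX; have := rho_sub Hr YX; case: Hr => Hd _ _; have := Hd Y.
rewrite /independent in HX *; lia.
Qed.

Lemma indep_le (F : finFieldType) (n : nat) (rho : subsp F n -> nat) (U : subsp F n) :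
  qmatroid_axioms rho -> independent rho U -> (\dim U <= qrank rho)%N.
Proof. by case=> _ Hm _ HU; rewrite -HU; apply: Hm; apply: subvf. Qed.

Lemma basis_of_dim (F : finFieldType) (n : nat) (rho : subsp F n -> nat) (B : subsp F n) :
  qmatroid_axioms rho -> independent rho B -> \dim B = qrank rho -> qbasis rho B.
Proof.
move=> Hr HB dB; split => // U HU BU; apply/eqP; rewrite eq_sym eqEdim BU /= dB.
exact: indep_le.
Qed.

Lemma sub_line0 (F : finFieldType) (n : nat) (x : 'rV[F]_n) (Y : subsp F n) :
  x \notin Y -> (Y :&: <[x]>)%VS = 0%VS.
Proof.
move=> xY; apply/eqP; rewrite -subv0; apply/subvP => y.
rewrite memv_cap => /andP[yY /vlineP[c yc]]; rewrite memv0 yc.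
have [->|c0] := eqVneq c 0; first by rewrite scale0r.
case/negP: xY; have -> : x = c^-1 *: y by rewrite yc scalerA mulVf ?scale1r.
by rewrite memvZ.
Qed.

Lemma dim_add_line (F : finFieldType) (n : nat) (x : 'rV[F]_n) (Y : subsp F n) :
  x \notin Y -> \dim (Y + <[x]>)%VS = (\dim Y).+1.
Proof.
move=> xY; rewrite dimv_disjoint_sum ?sub_line0 // dim_vline.
have -> : x != 0 by apply: contra xY => /eqP ->; rewrite rpred0.
by rewrite addn1.
Qed.

Lemma chain_sub (F : finFieldType) (n : nat) (A : nat -> subsp F n) lo r :
  (forall l, (lo <= l)%N -> (l < r)%N -> (A l <= A l.+1)%VS) ->
  forall l m, (lo <= l)%N -> (l <= m)%N -> (m <= r)%N -> (A l <= A m)%VS.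
Proof.
move=> H l m Hl; elim: m => [|m IH].
  by rewrite leqn0 => /eqP -> _; apply: subvv.
rewrite leq_eqVlt => /orP[/eqP -> _|]; first exact: subvv.
rewrite ltnS => lm mr; apply: subv_trans (IH lm (ltnW mr)) _; apply: H => //.
exact: leq_trans lm.
Qed.

Lemma key_contra (F : finFieldType) (n : nat) (o : F -> nat) (o_inj : injective o)
  (o0 : o 0 = 0%N) (o1 : o 1 = 1%N) k (W' W X : subsp F n) v :
  subsp_lt o k W' W -> (W' <= X)%VS -> (W <= X)%VS -> is_min_nonzero o X v ->
  v \in W -> v \notin W' -> False.
Proof.
case=> M [N [rM rN eM eN [i [Habove Hlt]]]] W'X WX [vX v0 vmin] vW vW'.
have kpos : (0 < k)%N by case: i {Habove Hlt} => i' /= H; apply: leq_ltn_trans (leq0n i') H.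
have hb : (k.-1 < k)%N by rewrite ltn_predL.
pose b := Ordinal hb.
have Hb : forall i : 'I_k, (i <= b)%N by move=> i'; rewrite /= -ltnS prednK // ltn_ord.
have uNv : v = row b N \/ vec_lt o (row b N) v.
  by apply: (rref_bottom o_inj o0 o1 rN Hb) => //; rewrite eN.
have uMW : row b M \in W' by rewrite -eM row_in_rowspan.
have vuM : vec_lt o v (row b M).
  apply: vmin; first exact: (subvP W'X).
    exact: rref_row_neq0.
  by apply: contra vW' => /eqP <-.
have MN : row b M = row b N \/ vec_lt o (row b M) (row b N).
  have [ib|ib] := eqVneq i b; first by right; rewrite -ib.
  left; apply: Habove; rewrite ltn_neqAle Hb andbT; exact: ib.
case: MN => [E1|L1]; case: uNv => [E2|L2].
- by apply: (@vec_lt_irr _ _ o v); rewrite {2}E2 -E1.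
- by apply: (@vec_lt_irr _ _ o v); apply: vec_lt_trans vuM _; rewrite E1.
- by apply: (@vec_lt_irr _ _ o v); apply: vec_lt_trans vuM _; rewrite E2.
- by apply: (@vec_lt_irr _ _ o v); apply: vec_lt_trans vuM (vec_lt_trans L1 L2).
Qed.


Lemma restr_info (F : finFieldType) (n : nat) (o : F -> nat) (rho : subsp F n -> nat)
  (A : nat -> subsp F n) m :
  facet rho A -> (1 <= m <= qrank rho)%N -> in_restriction o rho A m ->
  exists B, [/\ facet rho B, B m != A m, subsp_lt o m (B m) (A m) &
     forall l, (1 <= l <= qrank rho)%N -> l != m -> B l = A l].
Proof.
move=> [HA1 _] Hm [B [[HB1 HB2] [e [He neq Habove Hlt]] Hag]].
have agree : forall l, (1 <= l <= qrank rho)%N -> l != m -> B l = A l.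
  move=> l Hl nl; case: (Hag l Hl nl) => l' [Hl' E].
  have ll' : l = l' by rewrite -(proj2 (HA1 l Hl)) E (proj2 (HB1 l' Hl')).
  by subst l'; rewrite E.
case: (eqVneq e m) => [em|ne]; last by rewrite agree ?eqxx in neq.
subst e; exists B; split => //.
Qed.

Lemma inter_facts (F : finFieldType) (n : nat) (rho : subsp F n -> nat)
  (A B : nat -> subsp F n) m :
  facet rho A -> facet rho B -> (1 <= m <= qrank rho)%N -> B m != A m ->
  (forall l, (1 <= l <= qrank rho)%N -> l != m -> B l = A l) ->
  \dim (B m :&: A m)%VS = m.-1 /\
  (forall y, y \in (B m :&: A m)%VS -> y != 0 -> (1 < m)%N /\ y \in A m.-1).
Proof.
move=> [HA1 HA2] [HB1 HB2] Hm neq agree.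
have dA := proj2 (HA1 m Hm); have dB := proj2 (HB1 m Hm).
have lt : (\dim (B m :&: A m)%VS < m)%N.
  rewrite ltn_neqAle; apply/andP; split; last first.
    by rewrite -[X in (_ <= X)%N]dA dimvS ?capvSr.
  apply: contra neq => /eqP E.
  have EA : (B m :&: A m)%VS = A m by apply/eqP; rewrite eqEdim capvSr E dA /=.
  have EB : (B m :&: A m)%VS = B m by apply/eqP; rewrite eqEdim capvSl E dB /=.
  by rewrite -EB EA.
case/andP: Hm => m1 mr.
case: (leqP m 1) => [m1'|m2].
  have m_1 : m = 1%N by apply/eqP; rewrite eqn_leq m1 m1'.
  subst m; have d0 : \dim (B 1%N :&: A 1%N)%VS = 0%N by move: lt; rewrite ltnS leqn0 => /eqP.
  split => // y; move/eqP: d0; rewrite dimv_eq0 => /eqP ->; rewrite memv0 => /eqP ->.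
  by rewrite eqxx.
have Hm1 : (1 <= m.-1 <= qrank rho)%N.
  apply/andP; split; first by rewrite -ltnS prednK // ltnW.
  by apply: leq_trans (leq_pred m) mr.
have sub : (A m.-1 <= B m :&: A m)%VS.
  rewrite subv_cap; apply/andP; split.
    rewrite -agree //; last by rewrite neq_ltn ltn_predL (ltnW m2) orTb.
    have := proj1 (HB2 m.-1 (proj1 (andP Hm1)) _).
    by rewrite (prednK (ltnW m2)); apply.
  have := proj1 (HA2 m.-1 (proj1 (andP Hm1)) _).
  by rewrite (prednK (ltnW m2)); apply.
have dA1 := proj2 (HA1 m.-1 Hm1).
have E : (B m :&: A m)%VS = A m.-1.
  apply/eqP; rewrite eq_sym eqEdim sub /= dA1 -ltnS prednK ?(ltnW m2) //.
rewrite E dA1; split => // y yA _; split => //.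
Qed.

Lemma chain_exists (F : finFieldType) (n : nat) (o : F -> nat) (o_inj : injective o) d :
  forall U : subsp F n, \dim U = d ->
  exists A : nat -> subsp F n, [/\ A d = U,
     forall l, (l <= d)%N -> \dim (A l) = l &
     forall l, (l < d)%N -> (A l <= A l.+1)%VS /\
        exists x, is_min_nonzero o (A l.+1) x /\ x \notin A l].
Proof.
elim: d => [|d IH] U dU.
  by exists (fun _ => U); split => // l; rewrite leqn0 => /eqP ->.
have U0 : U != 0%VS by rewrite -dimv_eq0 dU.
have [x xmin] := min_exists o_inj U0.
have [xU x0 _] := xmin.
pose H := (U :\: <[x]>)%VS.
have xH : x \notin H.
  apply/negP => xH'; have : x \in (H :&: <[x]>)%VS by rewrite memv_cap xH' memv_line.
  by rewrite capv_diff memv0 (negbTE x0).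
have dH : \dim H = d.
  have := dimv_cap_compl U <[x]>; rewrite (capv_idPr _) ?dim_vline ?x0; last by rewrite -memvE.
  by rewrite dU add1n => /eqP; rewrite eqSS => /eqP.
have HU : (H <= U)%VS by apply: diffvSl.
have [A' [A'd A'dim A'ch]] := IH H dH.
exists (fun l => if l == d.+1 then U else A' l); split.
- by rewrite eqxx.
- move=> l; rewrite leq_eqVlt => /orP[/eqP->|ld]; first by rewrite eqxx.
  by rewrite (ltn_eqF ld) A'dim.
- move=> l ld; rewrite (ltn_eqF ld) eqSS.
  case: (eqVneq l d) => [->|nld].
    by rewrite A'd; split => //; exists x.
  have ld' : (l < d)%N by rewrite ltn_neqAle nld -ltnS.
  by apply: A'ch.
Qed.

Lemma neq_dim (F : finFieldType) (n : nat) (X Y : subsp F n) l :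
  \dim X = l -> \dim Y = l.+1 -> X != Y.
Proof. by move=> dX dY; apply/eqP => E; move: dY; rewrite -E dX; lia. Qed.


Lemma dir1 (F : finFieldType) (n : nat) (o : F -> nat)
  (o_inj : injective o) (o0 : o 0 = 0%N) (o1 : o 1 = 1%N)
  (rho : subsp F n -> nat) (Hrho : qmatroid_axioms rho)
  (Hr : (1 <= qrank rho)%N) :
  (exists A : nat -> subsp F n, facet rho A /\ restriction_full o rho A) ->
  (exists Fi Fj : subsp F n,
     [/\ qbasis rho Fi, qbasis rho Fj, subsp_lt o (qrank rho) Fi Fj,
         \dim (Fi :&: Fj)%VS = (qrank rho).-1 &
         exists v, is_min_nonzero o Fj v /\ v \notin Fi]).
Proof.
case=> A [HA Hfull].
set r := qrank rho in Hr *.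
have [HA1 HA2] := HA.
have Hr1 : (1 <= r <= r)%N by rewrite Hr leqnn.
have [Arind dAr] := HA1 r Hr1.
have Ar0 : A r != 0%VS by rewrite -dimv_eq0 dAr -lt0n.
have [v vmin] := min_exists o_inj Ar0.
have [vAr v0 _] := vmin.
have Asub := @chain_sub _ _ A 1 r (fun l l1 lr => proj1 (HA2 l l1 lr)).
have exk : exists k, (0 < k)%N && (v \in A k) by exists r; rewrite Hr vAr.
case: (ex_minnP exk) => k /andP[k0 vAk] kmin.
have kr : (k <= r)%N by apply: kmin; rewrite Hr vAr.
have Hk : (1 <= k <= r)%N by rewrite k0 kr.
have [B [HB neq Hlt agree]] := restr_info HA Hk (Hfull k Hk).
have [dint Hint] := inter_facts HA HB Hk neq agree.
have vB : v \notin B k.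
  apply/negP => vBk.
  have vBA : v \in (B k :&: A k)%VS by rewrite memv_cap vBk vAk.
  have [k1 vA1] := Hint v vBA v0.
  have := kmin k.-1; rewrite vA1 andbT.
  have -> : (0 < k.-1)%N by rewrite -ltnS prednK.
  by move/(_ isT); rewrite leqNgt ltn_predL k0.
case: (ltnP k r) => [kr'|rk].
  exfalso.
  have [HB1 HB2] := HB.
  apply: (key_contra o_inj o0 o1 Hlt (X := A r) _ _ vmin vAk vB).
    apply: subv_trans (proj1 (HB2 k k0 kr')) _.
    rewrite agree ?(gtn_eqF (ltnSn k)) //.
    exact: Asub.
  exact: Asub.
have kr_eq : k = r by apply/eqP; rewrite eqn_leq kr rk.
rewrite kr_eq in Hlt dint vB neq.
have [HB1 HB2] := HB.
exists (B r), (A r); split => //.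
- by apply: basis_of_dim => //; [exact: (proj1 (HB1 r Hr1)) | exact: (proj2 (HB1 r Hr1))].
- by apply: basis_of_dim.
- by exists v.
Qed.

Lemma dir2 (F : finFieldType) (n : nat) (o : F -> nat)
  (o_inj : injective o) (o0 : o 0 = 0%N) (o1 : o 1 = 1%N)
  (rho : subsp F n -> nat) (Hrho : qmatroid_axioms rho)
  (Hr : (1 <= qrank rho)%N) :
  (exists Fi Fj : subsp F n,
     [/\ qbasis rho Fi, qbasis rho Fj, subsp_lt o (qrank rho) Fi Fj,
         \dim (Fi :&: Fj)%VS = (qrank rho).-1 &
         exists v, is_min_nonzero o Fj v /\ v \notin Fi]) ->
  (exists A : nat -> subsp F n, facet rho A /\ restriction_full o rho A).
Proof.
case=> Fi [Fj [HFi HFj Hlt dint [v [vmin vFi]]]].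
set r := qrank rho in Hr Hlt dint *.
have [M [N [rM rN eM eN _]]] := Hlt.
have dFi : \dim Fi = r by rewrite -eM rref_dim.
have dFj : \dim Fj = r by rewrite -eN rref_dim.
have [Fjind _] := HFj.
have [Fiind _] := HFi.
have [vFj v0 vminP] := vmin.
have [A' [A'top A'dim A'ch]] := chain_exists o_inj dint.
pose A l := if (r <= l)%N then Fj else A' l.
have Ar : A r = Fj by rewrite /A leqnn.
have Alt : forall l, (l < r)%N -> A l = A' l by move=> l lr; rewrite /A leqNgt lr.
have Adim : forall l, (l <= r)%N -> \dim (A l) = l.
  move=> l; rewrite leq_eqVlt => /orP[/eqP->|lr]; first by rewrite Ar dFj.
  by rewrite Alt // A'dim // -ltnS prednK.
have Ach : forall l, (l < r)%N -> (A l <= A l.+1)%VS /\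
    exists x, is_min_nonzero o (A l.+1) x /\ x \notin A l.
  move=> l lr; rewrite Alt //; case: (eqVneq l.+1 r) => [e|ne].
    rewrite e Ar; have -> : l = r.-1 by rewrite -e.
    rewrite A'top; split; first exact: capvSr.
    exists v; split => //; apply: contra vFi; rewrite memv_cap => /andP[] //.
  have lr1 : (l < r.-1)%N by rewrite -ltnS prednK // ltn_neqAle ne lr.
  rewrite Alt; first exact: A'ch.
  by rewrite ltn_neqAle ne lr.
have Asub := @chain_sub _ _ A 0 r (fun l _ lr => proj1 (Ach l lr)).
have AFj : forall l, (l <= r)%N -> (A l <= Fj)%VS.
  by move=> l lr; rewrite -Ar; apply: Asub.
have Aind : forall l, (l <= r)%N -> independent rho (A l).
  by move=> l lr; apply: indep_sub Hrho Fjind (AFj l lr).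
have HA : facet rho A.
  split.
    by move=> m /andP[_ mr]; split; [exact: Aind | exact: Adim].
  move=> m _ mr; split; first exact: proj1 (Ach m mr).
  by apply: (@neq_dim _ _ _ _ m); apply: Adim => //; apply: ltnW.
exists A; split => //.
move=> m /andP[m1 mr].
case: (eqVneq m r) => [em|nm].
  rewrite em.
  pose B l := if l == r then Fi else A l.
  exists B; split.
  - split.
      move=> l /andP[l1 lr]; rewrite /B; case: eqP => [->|_].
        by split.
      by split; [exact: Aind | exact: Adim].
    move=> l l1 lr; rewrite /B (ltn_eqF lr).
    case: (eqVneq l.+1 r) => [e|ne].
      split; last by apply: neq_dim; [apply: Adim; apply: ltnW | rewrite dFi e].
      have -> : l = r.-1 by rewrite -e.
      by rewrite Alt ?A'top ?capvSl // ltn_predL (leq_trans _ Hr).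
    split; first exact: proj1 (Ach l lr).
    by apply: (@neq_dim _ _ _ _ l); apply: Adim => //; apply: ltnW.
  - exists r; split.
    + by rewrite Hr leqnn.
    + rewrite /B eqxx Ar; apply: contraNneq vFi => ->; exact: vFj.
    + by move=> e' /andP[a b]; have := leq_trans a b; rewrite ltnn.
    + by rewrite /B eqxx Ar.
  - move=> l Hl nl; exists l; split => //.
    by rewrite /B (negbTE nl).
have mr' : (m < r)%N by rewrite ltn_neqAle nm mr.
have [_ [x [xmin xAm]]] := Ach m mr'.
have [xA1 x0 xminP] := xmin.
have xAm1 : x \notin A m.-1.
  apply: contra xAm; apply: (subvP (Asub _ _ _ _ _)) => //.
  exact: leq_pred.
pose W := (A m.-1 + <[x]>)%VS.
have dW : \dim W = m.
  rewrite dim_add_line // Adim ?prednK //.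
  exact: leq_trans (leq_pred m) mr.
have WA1 : (W <= A m.+1)%VS.
  rewrite subv_add -memvE xA1 andbT; apply: Asub => //.
  exact: leq_trans (leq_pred m) (leqnSn m).
have xW : x \in W by apply: (subvP (addvSr _ _)); apply: memv_line.
pose B l := if l == m then W else A l.
have Bdim : forall l, (l <= r)%N -> \dim (B l) = l.
  by move=> l lr; rewrite /B; case: eqP => [->|_]; [exact: dW | exact: Adim].
have Bsub : forall l, (l < r)%N -> (B l <= B l.+1)%VS.
  move=> l lr; rewrite /B; case: (eqVneq l m) => [->|nlm].
    by rewrite (gtn_eqF (ltnSn m)).
  case: (eqVneq l.+1 m) => [e|ne]; last exact: proj1 (Ach l lr).
  have -> : l = m.-1 by rewrite -e.
  exact: addvSl.
exists B; split.
- split.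
    move=> l /andP[_ lr]; split; last exact: Bdim.
    rewrite /B; case: (eqVneq l m) => [_|_]; last exact: Aind.
    apply: indep_sub Hrho Fjind _; apply: subv_trans WA1 (AFj _ mr').
  move=> l _ lr; split; first exact: Bsub.
  by apply: (@neq_dim _ _ _ _ l); apply: Bdim => //; apply: ltnW.
- exists m; split.
  + by rewrite m1 mr.
  + by rewrite /B eqxx; apply: contraNneq xAm => <-.
  + by move=> e' /andP[me' _]; rewrite /B (gtn_eqF me').
  + rewrite /B eqxx.
    have [MW [rMW eMW]] := rref_mx_exists dW m1.
    have [NA [rNA eNA]] := rref_mx_exists (Adim m (ltnW mr')) m1.
    exists MW, NA; split => //.
    have hb : (m.-1 < m)%N by rewrite ltn_predL.
    pose b := Ordinal hb.
    have Hb : forall i : 'I_m, (i <= b)%N by move=> i'; rewrite /= -ltnS prednK // ltn_ord.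
    exists b; split.
      by move=> i' bi'; have := Hb i'; rewrite leqNgt bi'.
    have H1 := rref_bottom o_inj o0 o1 rMW Hb (w := x).
    have H2 : vec_lt o x (row b NA).
      have rA : row b NA \in A m by rewrite -eNA row_in_rowspan.
      apply: xminP.
      - by apply: (subvP (proj1 (Ach m mr'))).
      - exact: rref_row_neq0.
      - by apply: contraNneq xAm => <-.
    case: H1 => [||<-|L] //; first by rewrite eMW.
    exact: vec_lt_trans L H2.
- move=> l Hl nl; exists l; split => //.
  by rewrite /B (negbTE nl).
Qed.


Theorem lemma5p8 (F : finFieldType) (n : nat) (o : F -> nat)
  (o_inj : injective o) (o0 : o 0 = 0%N) (o1 : o 1 = 1%N)
  (rho : subsp F n -> nat) (Hrho : qmatroid_axioms rho)
  (Hr : (1 <= qrank rho)%N) :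
  (exists A : nat -> subsp F n, facet rho A /\ restriction_full o rho A) <->
  (exists Fi Fj : subsp F n,
     [/\ qbasis rho Fi, qbasis rho Fj, subsp_lt o (qrank rho) Fi Fj,
         \dim (Fi :&: Fj)%VS = (qrank rho).-1 &
         exists v, is_min_nonzero o Fj v /\ v \notin Fi]).
Proof.
split; [exact: dir1 | exact: dir2].
Qed.
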